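(* Let $n\ge3$, $k\ge0$ with $n\le k$. Let $S\subseteq\mathrm{Inc}(A,B)$ be an independent, non-reversible set in $G_n^k$ which contains a strict alternating cycle $\{(x_\alpha,y_\alpha):\alpha\in[3]\}$ satisfying the Disjoint Property with $x_1=a_1$ and $y_3=b_{k+2}$. If $A(S)\subseteq\{a_1,\dots,a_{k+2}\}$ and $B(S)\subseteq\{b_1,\dots,b_{k+2}\}$, then $|S|\le (k+1)(k+2)/2+2-n$.
   Context: For integers $n\ge3$, $k\ge0$, the crown $S_n^k$ is the poset with ground set $A\cup B$, $A=\{a_1,\dots,a_{n+k}\}$, $B=\{b_1,\dots,b_{n+k}\}$, indices cyclic modulo $n+k$; elements of $A$ are pairwise incomparable, as are elements of $B$, and $a_i$ is incomparable to $b_j$ when $j\in\{i,\dots,i+k\}$ (mod $n+k$), while $a_i<b_j$ otherwise. $\mathrm{Inc}(A,B)$ is the set of pairs $(a,b)\in A\times B$ with $a$ incomparable to $b$; $G_n^k$ has vertex set $\mathrm{Inc}(A,B)$ with $(a,b)$ adjacent to $(x,y)$ iff $a<y$ and $x<b$. A set $R\subseteq\mathrm{Inc}(A,B)$ is reversible if some linear extension $L$ of $S_n^k$ has $b<a$ in $L$ for all $(a,b)\in R$. $A(S)=\{a:\exists b,(a,b)\in S\}$, $B(S)=\{b:\exists a,(a,b)\in S\}$. An indexed set $\{(x_\alpha,y_\alpha):\alpha\in[m]\}\subseteq\mathrm{Inc}(A,B)$ is an alternating cycle if $x_\alpha\le y_{\alpha-1}$ for all $\alpha$ (cyclic indices);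 strict if $x_\alpha\le y_\beta$ iff $\beta=\alpha-1$. Circle conventions: points $u_1,\dots,u_{n+k}$ lie clockwise on a circle, with $a_i$ and $b_i$ both at $u_i$; a chain $p_1\,R_1\,p_2\cdots p_\ell$ with $R_j\in\{\prec,\preceq\}$ means travelling clockwise from the position of $p_1$ until first reaching the position of $p_\ell$ one meets the positions of $p_2,\dots,p_{\ell-1}$ in order, $\prec$ requiring distinct consecutive positions and $\preceq$ allowing equality. A strict alternating cycle of size $3$ satisfies the Disjoint Property if $x_1\preceq y_1\prec x_2\preceq y_2\prec x_3\preceq y_3$. *)

(* Defs.v *)
From mathcomp Require Import all_boot.
Set Implicit Arguments. Unset Strict Implicit. Unset Printing Implicit Defensive.

(* Crown S_n^k with N = n + k.  a_i and b_i (paper indices 1..N) are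
   represented 0-based by the ordinal i-1 : 'I_N.  Ground set: 'I_N + 'I_N,
   inl i = a_(i+1), inr j = b_(j+1). *)

Definition cwd (N : nat) (p q : 'I_N) : nat := (q + N - p) %% N.

Definition incomp (N k : nat) (i j : 'I_N) : bool := cwd i j <= k.

Definition crown_elt (N : nat) := ('I_N + 'I_N)%type.

Definition crown_lt (N k : nat) (p q : crown_elt N) : bool :=
  match p, q with
  | inl i, inr j => ~~ incomp k i j
  | _, _ => false
  end.

Definition crown_le (N k : nat) (p q : crown_elt N) : bool :=
  (p == q) || crown_lt k p q.

Definition IncAB (N k : nat) : {set 'I_N * 'I_N} :=
  [set ab | incomp k ab.1 ab.2].

Definition is_linext (N k : nat) (L : rel (crown_elt N)) : Prop :=
  [/\ reflexive L, antisymmetric L, transitive L, total L &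
      forall p q, crown_le k p q -> L p q].

(* R reversible: some linear extension has b < a for all (a,b) in R
   (b <> a holds automatically since inr _ <> inl _) *)
Definition reversible (N k : nat) (R : {set 'I_N * 'I_N}) : Prop :=
  exists L : rel (crown_elt N), is_linext k L /\
    forall ab, ab \in R -> L (inr ab.2) (inl ab.1) && (inr ab.2 != inl ab.1 :> crown_elt N).

Definition Gadj (N k : nat) (u v : 'I_N * 'I_N) : bool :=
  crown_lt k (inl u.1) (inr v.2) && crown_lt k (inl v.1) (inr u.2).

Definition independent (N k : nat) (S : {set 'I_N * 'I_N}) : Prop :=
  S \subset IncAB N k /\ forall u v, u \in S -> v \in S -> ~~ Gadj k u v.

(* indexed set {(x_a, y_a) : a in [m]} (0-based indices), with
   beta = alpha - 1 cyclically  iff  (beta + 1) mod m = alpha *)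
Definition alt_cycle (N k m : nat) (x y : 'I_m -> 'I_N) : Prop :=
  (forall a, incomp k (x a) (y a)) /\
  forall a b : 'I_m, (b.+1 %% m == a) -> crown_le k (inl (x a)) (inr (y b)).

Definition strict_alt_cycle (N k m : nat) (x y : 'I_m -> 'I_N) : Prop :=
  alt_cycle k x y /\
  forall a b : 'I_m, crown_le k (inl (x a)) (inr (y b)) = (b.+1 %% m == a).

Definition i3_0 : 'I_3 := @Ordinal 3 0 isT.
Definition i3_1 : 'I_3 := @Ordinal 3 1 isT.
Definition i3_2 : 'I_3 := @Ordinal 3 2 isT.

(* Disjoint Property x1 <=. y1 <. x2 <=. y2 <. x3 <=. y3 : measuring
   clockwise distances from the position of x1, the positions are met in
   order on the clockwise arc from x1 to y3 ("<." = distinct positions). *)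
Definition disjoint_property (N : nat) (x y : 'I_3 -> 'I_N) : Prop :=
  let d q := cwd (x i3_0) q in
  [/\ d (y i3_0) < d (x i3_1), d (x i3_1) <= d (y i3_1),
      d (y i3_1) < d (x i3_2) & d (x i3_2) <= d (y i3_2)].

(* Main.v *)
Require Import Defs.
From mathcomp Require Import all_boot zify.

Lemma incE (n k : nat) (i j : 'I_(n+k)) :
  incomp k i j = ((i <= j) && (j - i <= k)) || ((j < i) && (n <= i - j)).
Proof.
rewrite /incomp /cwd.
have hi := ltn_ord i; have hj := ltn_ord j.
case: (leqP i j) => h /=.
- rewrite addnC -addnBA // modnDl modn_small; last by lia.
  apply/idP/idP => H; lia.
- rewrite modn_small; last by lia.
  apply/idP/idP => H; lia.
Qed.

Lemma cardT (N m : nat) : m <= N ->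
  #|[set p : 'I_N * 'I_N | (p.1 < p.2) && (p.2 < m)]| = 'C(m, 2).
Proof.
elim: m => [|m IH] hm.
  apply/eqP; rewrite cards_eq0; apply/eqP/setP => p; rewrite !inE ltn0 andbF //.
have hmN : m < N by [].
pose j0 := Ordinal hmN.
have -> : [set p : 'I_N * 'I_N | (p.1 < p.2) && (p.2 < m.+1)] =
   [set p : 'I_N * 'I_N | (p.1 < p.2) && (p.2 < m)] :|:
   [set (widen_ord (ltnW hmN) i, j0) | i : 'I_m].
  apply/setP => p; rewrite !inE; apply/idP/idP.
  - case/andP => h1 h2; rewrite ltnS leq_eqVlt in h2.
    case/orP: h2 => h2; last by rewrite h1 h2.
    apply/orP; right; apply/imsetP.
    have hp1 : p.1 < m by rewrite -(eqP h2).
    exists (Ordinal hp1) => //.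
    case: p h1 h2 hp1 => a b /= h1 h2 hp1; congr pair; apply: val_inj => //=.
    by rewrite (eqP h2).
  - case/orP => [/andP [h1 h2]|/imsetP [i _ ->]]; first by rewrite h1 ltnW.
    by rewrite /= ltn_ord ltnSn.
rewrite cardsU.
have -> : [set p : 'I_N * 'I_N | (p.1 < p.2) && (p.2 < m)] :&:
   [set (widen_ord (ltnW hmN) i, j0) | i : 'I_m] = set0.
  apply/setP => p; rewrite !inE; apply/negP => /andP [/andP [h1 h2] /imsetP [i _ E]].
  by move: h2; rewrite E /= ltnn.
rewrite cards0 subn0 IH ?(ltnW hmN) // card_imset ?card_ord.
  by rewrite binS bin1.
by move=> a b [] /val_inj.
Qed.
Theorem lemma6p7 (n k : nat) (S : {set 'I_(n + k) * 'I_(n + k)})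
    (x y : 'I_3 -> 'I_(n + k)) :
  3 <= n -> n <= k ->
  independent k S -> ~ reversible k S ->
  strict_alt_cycle k x y -> (forall a, (x a, y a) \in S) ->
  disjoint_property x y ->
  val (x i3_0) = 0 -> val (y i3_2) = k.+1 ->
  (forall ab, ab \in S -> ab.1 < k.+2) ->
  (forall ab, ab \in S -> ab.2 < k.+2) ->
  #|S| + n <= (k.+1 * k.+2) %/ 2 + 2.
Proof.
move=> hn3 hnk [hsub hind] _ _ hxyS hdisj hx0 hy2 hb1 hb2.
have {}hx0 : nat_of_ord (x i3_0) = 0 := hx0.
have {}hy2 : nat_of_ord (y i3_2) = k.+1 := hy2.
have HI : forall p, p \in S ->
   (p.1 <= p.2 /\ p.2 - p.1 <= k) \/ (p.2 < p.1 /\ n <= p.1 - p.2).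
  move=> p hp; have := subsetP hsub p hp; rewrite inE incE.
  by case/orP => /andP [h1 h2]; [left|right].
have HA : forall p q, p \in S -> q \in S ->
   ((p.1 <= q.2 /\ q.2 - p.1 <= k) \/ (q.2 < p.1 /\ n <= p.1 - q.2)) \/
   ((q.1 <= p.2 /\ p.2 - q.1 <= k) \/ (p.2 < q.1 /\ n <= q.1 - p.2)).
  move=> p q hp hq; have := hind p q hp hq; rewrite /Gadj /=.
  case/nandP => /negPn; rewrite incE => /orP [] /andP [h1 h2]; tauto.
set a0 := x i3_0.
have hy1x3 : nat_of_ord (y i3_0) < nat_of_ord (x i3_2).
  case: hdisj => /=; rewrite /cwd -/a0 hx0 !subn0.
  rewrite !modnDr !modn_small ?ltn_ord //; lia.
have hp0 := hxyS i3_0; have hq0 := hxyS i3_2.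
pose P := fun b : 'I_(n+k) => ((a0, b) \in S) && (b < x i3_2).
have P0 : P (y i3_0) by rewrite /P hp0 hy1x3.
case: (arg_maxnP (fun b : 'I_(n+k) => nat_of_ord b) P0) => b' /andP [hb'S hb'x] hmax.
have Hmax : forall p, p \in S -> nat_of_ord p.1 = 0 -> nat_of_ord p.2 < nat_of_ord (x i3_2) -> nat_of_ord p.2 <= b'.
  move=> [p1 p2] hp /= h1 h2.
  have e : p1 = a0 by apply: val_inj; rewrite /= h1 hx0.
  by apply: hmax; rewrite /P -e hp h2.
have Hb'n : b' + n <= x i3_2.
  have := HA _ _ hb'S hq0; have := hb1 _ hq0; rewrite /= hy2 hx0; lia.
pose mk (m : nat) : 'I_(n+k) := insubd a0 m.
have mkE : forall m, m < n + k -> nat_of_ord (mk m) = m.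
  by move=> m hm; rewrite val_insubd hm.
pose f (p : 'I_(n+k) * 'I_(n+k)) : 'I_(n+k) * 'I_(n+k) :=
  if nat_of_ord p.1 == 0 then (a0, mk p.2.+1)
  else if nat_of_ord p.2 == k.+1 then (a0, p.1)
  else if p.1 <= p.2 then (p.1, mk p.2.+1)
  else (mk p.2.+1, p.1).
have spec : forall p, p \in S ->
  (nat_of_ord p.1 = 0 /\ nat_of_ord (f p).1 = 0 /\ nat_of_ord (f p).2 = (nat_of_ord p.2).+1) \/
  (0 < nat_of_ord p.1 /\ nat_of_ord p.2 = k.+1 /\ nat_of_ord (f p).1 = 0 /\ nat_of_ord (f p).2 = nat_of_ord p.1) \/
  (0 < nat_of_ord p.1 /\ nat_of_ord p.2 <= k /\ nat_of_ord p.1 <= nat_of_ord p.2 /\ nat_of_ord (f p).1 = nat_of_ord p.1 /\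
     nat_of_ord (f p).2 = (nat_of_ord p.2).+1) \/
  (0 < nat_of_ord p.1 /\ nat_of_ord p.2 <= k /\ nat_of_ord p.2 < nat_of_ord p.1 /\ nat_of_ord (f p).1 = (nat_of_ord p.2).+1 /\
     nat_of_ord (f p).2 = nat_of_ord p.1).
  move=> [p1 p2] hp /=; have /= h2 := hb2 _ hp.
  have hm : (nat_of_ord p2).+1 < n + k by lia.
  rewrite /f; case: eqP => e1 /=.
    by left; rewrite hx0 mkE.
  have {}e1 : nat_of_ord p1 <> 0 := e1.
  case: eqP => e2 /=.
    have {}e2 : nat_of_ord p2 = k.+1 := e2. right; left; rewrite hx0; lia.
  have {}e2 : nat_of_ord p2 <> k.+1 := e2.
  case: ifP => [e3|/negbT e3] /=.
    by right; right; left; rewrite mkE //; do !split => //; lia.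
  by right; right; right; rewrite mkE //; do !split => //; lia.
have finj : {in S &, injective f}.
  move=> [p1 p2] [q1 q2] hp hq E.
  have /= E1 : nat_of_ord (f (p1, p2)).1 = nat_of_ord (f (q1, q2)).1 by rewrite E.
  have /= E2 : nat_of_ord (f (p1, p2)).2 = nat_of_ord (f (q1, q2)).2 by rewrite E.
  move: E1 E2.
  have /= := spec _ hp; have /= := spec _ hq; have /= := HI _ hp; have /= := HI _ hq.
  have /= := HA _ _ hp hq; have /= := hb1 _ hp; have /= := hb1 _ hq; have /= := hb2 _ hp;
  have /= := hb2 _ hq.
  set u1 := nat_of_ord (f (p1, p2)).1; set u2 := nat_of_ord (f (p1, p2)).2.
  set v1 := nat_of_ord (f (q1, q2)).1; set v2 := nat_of_ord (f (q1, q2)).2.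
  move=> h1 h2 h3 h4 h5 h6 h7 s1 s2 E1 E2.
  have [e1 e2] : nat_of_ord p1 = q1 /\ nat_of_ord p2 = q2 by lia.
  by congr pair; apply: val_inj.
pose T := [set p : 'I_(n+k) * 'I_(n+k) | (p.1 < p.2) && (p.2 < k.+2)].
pose Z := [set (a0, mk (b'.+2 + nat_of_ord t)) | t : 'I_(n - 2)].
have cZ : #|Z| = n - 2.
  rewrite card_imset ?card_ord //.
  move=> t t' [] /(congr1 (@nat_of_ord _)).
  have ht := ltn_ord t; have ht' := ltn_ord t'; have hx := ltn_ord (x i3_2).
  rewrite !mkE; try lia.
  by move=> e; apply: ord_inj; lia.
have fT : f @: S \subset T.
  apply/subsetP => _ /imsetP [[p1 p2] hp ->]; rewrite inE.
  have /= := spec _ hp; have /= := HI _ hp; have /= := hb1 _ hp; have /= := hb2 _ hp.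
  set u1 := nat_of_ord (f (p1, p2)).1; set u2 := nat_of_ord (f (p1, p2)).2.
  move=> h1 h2 h3 h4; apply/andP; split; lia.
have ZT : Z \subset T.
  apply/subsetP => _ /imsetP [t _ ->].
  have ht := ltn_ord t; have hx := ltn_ord (x i3_2).
  rewrite inE /= hx0 mkE; last by lia.
  have hx3 : nat_of_ord (x i3_2) < k.+2 := hb1 _ hq0.
  apply/andP; split; lia.
have dZ : f @: S :&: Z = set0.
  apply/setP => z; rewrite !inE; apply/negP => /andP [/imsetP [[p1 p2] hp ->] /imsetP [t _ E]].
  have E1 : nat_of_ord (f (p1, p2)).1 = 0 by rewrite E /= hx0.
  have ht := ltn_ord t; have hx := ltn_ord (x i3_2).
  have E2 : nat_of_ord (f (p1, p2)).2 = b'.+2 + nat_of_ord t by rewrite E /= mkE; lia.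
  move: E1 E2.
  have /= := spec _ hp; have /= := HI _ hp; have /= := hb1 _ hp; have /= := hb2 _ hp.
  have /= := HA _ _ hp hb'S; rewrite /= hx0.
  have /= hM := Hmax _ hp.
  set u1 := nat_of_ord (f (p1, p2)).1; set u2 := nat_of_ord (f (p1, p2)).2.
  move=> h0 h1 h2 h3 h4 E1 E2.
  case: (ltnP (nat_of_ord p2) (x i3_2)) => hlt.
    case: (eqVneq (nat_of_ord p1) 0) => h10.
      have := hM h10 hlt; lia.
    lia.
  lia.
have := cardsUI (f @: S) Z; rewrite dZ cards0 addn0 cZ (card_in_imset finj) => e.
have := subset_leq_card (introT subUsetP (conj fT ZT)); rewrite e.
have -> : #|T| = 'C(k.+2, 2) by rewrite /T cardT //; lia.
rewrite bin2 divn2 /= mulnC; lia.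
Qed.
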